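(* Let $T:X\to Y$ be an injective linear operator between Archimedean vector lattices, and assume that $X$ has sufficiently many components. If $T$ is disjointness preserving, then the inverse $T^{-1}:TX\to X$ satisfies condition $(\beta)$, i.e. for $y,y_0\in TX$ with $y\in\{y_0\}^{dd}$ (band taken in $Y$) we have $T^{-1}y\in\{T^{-1}y_0\}^{dd}$ (band taken in $X$).
   Context: All vector lattices are Archimedean. For a subset $A$ of a vector lattice $X$, $A^d=\{x\in X: |x|\wedge|a|=0 \text{ for all } a\in A\}$ and $A^{dd}=(A^d)^d$. For $a,b\in X$ we write $a\lhd b$ if $\{a\}^{dd}\subseteq\{b\}^{dd}$. A linear operator $S$ satisfies condition $(\beta)$ if $Sa\lhd Sb$ whenever $a\lhd b$. A linear operator is disjointness preserving if it maps disjoint elements to disjoint elements. An element $x'$ is a component of $x$ if $|x'|\wedge|x-x'|=0$. A vector lattice $X$ has sufficiently many components if whenever $x,u\in X$ with $x\notin\{u\}^{dd}$, there exists a nonzero component $x'$ of $x$ with $|x'|\wedge|u|=0$. *)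

(* Defs.v *)
From HB Require Import structures.
From mathcomp Require Import all_boot all_order all_algebra.
From mathcomp Require Import reals.
Set Implicit Arguments. Unset Strict Implicit. Unset Printing Implicit Defensive.
Import Order.TTheory GRing.Theory Num.Theory.
Local Open Scope ring_scope.

Record vl_ops (R : realType) (X : lmodType R) := VLOps {
  vle : X -> X -> Prop;
  vjoin : X -> X -> X;
  vmeet : X -> X -> X }.

Definition is_vector_lattice (R : realType) (X : lmodType R) (L : vl_ops X) :=
  (forall x, vle L x x) /\
      (forall x y, vle L x y -> vle L y x -> x = y) /\
      (forall x y z, vle L x y -> vle L y z -> vle L x z) /\
      (forall x y z, vle L x y -> vle L (x + z) (y + z)) /\
      (forall (a : R) x y, 0 <= a -> vle L x y -> vle L (a *: x) (a *: y)) /\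
      (forall x y, vle L x (vjoin L x y) /\ vle L y (vjoin L x y) /\
         forall z, vle L x z -> vle L y z -> vle L (vjoin L x y) z) /\
      (forall x y, vle L (vmeet L x y) x /\ vle L (vmeet L x y) y /\
         forall z, vle L z x -> vle L z y -> vle L z (vmeet L x y)).

Definition is_archimedean (R : realType) (X : lmodType R) (L : vl_ops X) :=
  forall x y : X, vle L 0 x -> (forall n : nat, vle L (x *+ n) y) -> x = 0.

Definition is_archimedean_vector_lattice (R : realType) (X : lmodType R)
  (L : vl_ops X) := is_vector_lattice L /\ is_archimedean L.

Definition vabs (R : realType) (X : lmodType R) (L : vl_ops X) (x : X) :=
  vjoin L x (- x).

Definition vdisj (R : realType) (X : lmodType R) (L : vl_ops X) (x y : X) :=
  vmeet L (vabs L x) (vabs L y) = 0.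

Definition dcomp (R : realType) (X : lmodType R) (L : vl_ops X)
  (A : X -> Prop) : X -> Prop :=
  fun x => forall a, A a -> vdisj L x a.

Definition band1 (R : realType) (X : lmodType R) (L : vl_ops X) (a : X) :
  X -> Prop := dcomp L (dcomp L (fun z => z = a)).

Definition vlhd (R : realType) (X : lmodType R) (L : vl_ops X) (a b : X) :=
  forall z, band1 L a z -> band1 L b z.

Definition disjointness_preserving (R : realType) (X Y : lmodType R)
  (LX : vl_ops X) (LY : vl_ops Y) (T : X -> Y) :=
  forall a b, vdisj LX a b -> vdisj LY (T a) (T b).

Definition is_component (R : realType) (X : lmodType R) (L : vl_ops X)
  (x' x : X) := vdisj L x' (x - x').

Definition sufficiently_many_components (R : realType) (X : lmodType R)
  (L : vl_ops X) :=
  forall x u : X, ~ band1 L u x ->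
    exists x' : X, [/\ is_component L x' x, x' <> 0 & vdisj L x' u].

(* Main.v *)
Require Import Defs.
From HB Require Import structures.
From mathcomp Require Import all_boot all_order all_algebra.
From mathcomp Require Import reals.
From Stdlib Require Import Classical.
Import Order.TTheory GRing.Theory Num.Theory.
Local Open Scope ring_scope.

Section VL.
Variables (R : realType) (X : lmodType R) (L : vl_ops X).
Hypothesis HL : is_vector_lattice L.
Local Notation "x <== y" := (vle L x y) (at level 70).

Lemma Lrefl x : x <== x. Proof. by case: HL. Qed.
Lemma Lanti x y : x <== y -> y <== x -> x = y.
Proof. by case: HL => _ [] h _; apply: h. Qed.
Lemma Ltr x y z : x <== y -> y <== z -> x <== z.
Proof. by case: HL => _ [] _ [] h _; apply: h. Qed.
Lemma Ladd x y z : x <== y -> x + z <== y + z.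
Proof. by case: HL => _ [] _ [] _ [] h _; apply: h. Qed.
Lemma Lscale (a : R) x y : 0 <= a -> x <== y -> a *: x <== a *: y.
Proof. by case: HL => _ [] _ [] _ [] _ [] h _; apply: h. Qed.
Lemma Ljl x y : x <== vjoin L x y. Proof. by case: HL => _ [] _ [] _ [] _ [] _ [] h _; case: (h x y). Qed.
Lemma Ljr x y : y <== vjoin L x y. Proof. by case: HL => _ [] _ [] _ [] _ [] _ [] h _; case: (h x y) => _ []. Qed.
Lemma Ljlub x y z : x <== z -> y <== z -> vjoin L x y <== z.
Proof. by case: HL => _ [] _ [] _ [] _ [] _ [] h _; case: (h x y) => _ [] _; apply. Qed.
Lemma Lml x y : vmeet L x y <== x. Proof. by case: HL => _ [] _ [] _ [] _ [] _ [] _ h; case: (h x y). Qed.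
Lemma Lmr x y : vmeet L x y <== y. Proof. by case: HL => _ [] _ [] _ [] _ [] _ [] _ h; case: (h x y) => _ []. Qed.
Lemma Lmglb x y z : z <== x -> z <== y -> z <== vmeet L x y.
Proof. by case: HL => _ [] _ [] _ [] _ [] _ [] _ h; case: (h x y) => _ [] _; apply. Qed.

Arguments Ladd {x y} z _.
Arguments Ltr {x y z} _ _.
Arguments Lscale a {x y} _ _.
Lemma Laddl x y z : x <== y -> z + x <== z + y.
Proof. by rewrite ![z + _]addrC; apply: Ladd. Qed.
Arguments Laddl {x y} z _.
Lemma Ladd2 x y z w : x <== y -> z <== w -> x + z <== y + w.
Proof. move=> h1 h2; exact: (Ltr (Ladd z h1) (Laddl y h2)). Qed.
Arguments Ladd2 {x y z w} _ _.
Lemma Lsub1 x y z : x <== y + z -> x - z <== y.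
Proof. by move=> h; have := Ladd (- z) h; rewrite addrK. Qed.
Lemma Lsub2 x y z : x - z <== y -> x <== y + z.
Proof. by move=> h; have := Ladd z h; rewrite subrK. Qed.
Lemma Lopp x y : x <== y -> - y <== - x.
Proof.
move=> h; have := Ladd (- x - y) h.
have -> : x + (- x - y) = - y by rewrite addrA addrN add0r.
by have -> : y + (- x - y) = - x by rewrite addrC -addrA addNr addr0.
Qed.
Lemma Lsubpos x y : 0 <== x -> y - x <== y.
Proof. move=> h; apply: Lsub1; rewrite -{1}[y]addr0; exact: Laddl. Qed.

Arguments Lsubpos {x} y _.
Lemma abs_ge x : x <== vabs L x. Proof. exact: Ljl. Qed.
Lemma abs_geN x : - x <== vabs L x. Proof. exact: Ljr. Qed.
Lemma abs_ge0 x : 0 <== vabs L x.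
Proof.
have h := Ladd2 (abs_ge x) (abs_geN x); rewrite addrN in h.
have h2 : (0 : R) <= 2^-1 by rewrite invr_ge0 ler0n.
have := Lscale (2^-1 : R) h2 h; rewrite scaler0.
suff -> : (2^-1 : R) *: (vabs L x + vabs L x) = vabs L x by [].
rewrite -{1 2}[vabs L x]scale1r -scalerDl scalerA.
by rewrite -[1 + 1]/(2%:R : R) mulVf ?scale1r // pnatr_eq0.
Qed.

Lemma meet_mono u a b : a <== b -> vmeet L u a <== vmeet L u b.
Proof. move=> h; apply: Lmglb; [exact: Lml | exact: Ltr (Lmr u a) h]. Qed.
Arguments meet_mono u {a b} _.
Lemma meet_ge0 u v : 0 <== u -> 0 <== v -> 0 <== vmeet L u v.
Proof. by move=> h1 h2; apply: Lmglb. Qed.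
Lemma meet_comm u v : vmeet L u v = vmeet L v u.
Proof. by apply: Lanti; apply: Lmglb; (exact: Lml || exact: Lmr). Qed.
Lemma meet_id u : vmeet L u u = u.
Proof. apply: Lanti; [exact: Lml | apply: Lmglb; exact: Lrefl]. Qed.

Arguments meet_ge0 {u v} _ _.
Lemma key u v w : 0 <== u -> 0 <== v -> 0 <== w ->
  vmeet L u (v + w) <== vmeet L u v + vmeet L u w.
Proof.
move=> hu hv hw; set t := vmeet L u (v + w); set m := vmeet L u w.
have hm : 0 <== m by apply: meet_ge0.
apply: Lsub2; apply: Lmglb.
  exact: Ltr (Lsubpos t hm) (Lml u (v + w)).
apply: Lsub1; rewrite addrC; apply: Lsub2; apply: Lmglb.
  exact: Ltr (Lsubpos t hv) (Lml u (v + w)).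
apply: Lsub1; rewrite addrC; exact: Lmr.
Qed.

Arguments key {u v w} _ _ _.
Lemma abs_sub a b : vabs L (a - b) <== vabs L a + vabs L b.
Proof.
apply: Ljlub; first exact: Ladd2 (abs_ge a) (abs_geN b).
rewrite opprB addrC; exact: Ladd2 (abs_geN a) (abs_ge b).
Qed.

Lemma disj_sub y a b : vdisj L y a -> vdisj L y b -> vdisj L y (a - b).
Proof.
rewrite /vdisj => ha hb; apply: Lanti; last exact: meet_ge0 (abs_ge0 _) (abs_ge0 _).
apply: Ltr (meet_mono _ (abs_sub a b)) _.
apply: Ltr (key (abs_ge0 _) (abs_ge0 _) (abs_ge0 _)) _.
by rewrite ha hb addr0; exact: Lrefl.
Qed.

Lemma disj_sym a b : vdisj L a b -> vdisj L b a.
Proof. by rewrite /vdisj meet_comm. Qed.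

Lemma disj_self y : vdisj L y y -> y = 0.
Proof.
rewrite /vdisj meet_id => h.
have h1 : y <== 0 by rewrite -h; exact: abs_ge.
have h2 : - y <== 0 by rewrite -h; exact: abs_geN.
apply: Lanti => //.
by have := Ladd y h2; rewrite addNr add0r.
Qed.
End VL.
Arguments disj_sub {R X L} HL {y a b} _ _.
Arguments disj_self {R X L} HL {y} _.
Arguments disj_sym {R X L} HL {a b} _.

Theorem theorem3p2 (R : realType) (X Y : lmodType R)
  (LX : vl_ops X) (LY : vl_ops Y)
  (HX : is_archimedean_vector_lattice LX)
  (HY : is_archimedean_vector_lattice LY)
  (T : {linear X -> Y})
  (Tinj : injective T)
  (HXc : sufficiently_many_components LX)
  (Tdp : disjointness_preserving LX LY T) :
  forall x x0 : X, vlhd LY (T x) (T x0) -> vlhd LX x x0.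
Proof.
case: HX => HX _; case: HY => HY _.
move=> x x0 H.
suff Hb : band1 LX x0 x.
  move=> z Hz w Hw; apply: Hz => a ->.
  by apply: disj_sym => //; apply: Hb => //; move=> b ->.
apply: NNPP => Hn.
have [x' [Hc Hnz Hd]] := HXc x x0 Hn.
apply: Hnz.
have HTd : vdisj LY (T x') (T x0) := Tdp _ _ Hd.
have HTx : band1 LY (T x) (T x).
  move=> a Ha; apply: disj_sym => //; exact: Ha.
have HT := H _ HTx.
have e1 : vdisj LY (T x') (T x).
  apply: disj_sym => //; apply: HT => b ->; exact: HTd.
have e2 : vdisj LY (T x') (T x - T x').
  by rewrite -linearB; apply: Tdp.
have e3 := disj_sub HY e1 e2.
rewrite opprB addrC subrK in e3.
by apply: Tinj; rewrite (disj_self HY e3) linear0.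
Qed.
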